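(* Let $\theta_1,\dots,\theta_m$ be i.i.d. random variables uniformly distributed on $[0,1]$. If $m\ge 20$, then $$\mathbb{E}\left[\min_{j\in[m]}\left(\tfrac14-\theta_j\right)^2\right]\le \frac{1.01}{2(m+1)(m+2)}.$$ *)

(* Defs.v *)
From HB Require Import structures.
From mathcomp Require Import all_boot all_order all_algebra.
From mathcomp Require Import all_classical all_reals all_analysis.
Set Implicit Arguments. Unset Strict Implicit. Unset Printing Implicit Defensive.
Import Order.TTheory GRing.Theory Num.Theory.
Local Open Scope classical_set_scope.
Local Open Scope ring_scope.

(* Mutual independence of a finite family of real random variables:
   product rule for every family of Borel sets (taking B j = setT for
   unused indices gives the product rule for every subfamily). *)
Definition mutually_independent d (T : measurableType d) (R : realType)
  (P : probability T R) (m : nat) (X : 'I_m -> T -> R) : Prop :=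
  forall B : 'I_m -> set R, (forall j, measurable (B j)) ->
    P (\bigcap_(j in [set: 'I_m]) (X j @^-1` B j)) =
    (\prod_(j < m) P (X j @^-1` B j))%E.

Definition uniform01 d (T : measurableType d) (R : realType)
  (P : probability T R) (X : T -> R) : Prop :=
  forall B : set R, measurable B ->
    P (X @^-1` B) = uniform_prob (@ltr01 R) B.

(* Main.v *)
Require Import Defs.
From HB Require Import structures.
From mathcomp Require Import all_boot all_order all_algebra.
From mathcomp Require Import all_classical all_reals all_analysis.
From mathcomp Require Import measurable_realfun.
From mathcomp Require Import ring lra.
Import Order.TTheory GRing.Theory Num.Theory.

Module MA.
Set Implicit Arguments. Unset Strict Implicit.
Local Open Scope ring_scope.

Section Alg.
Variable R : realFieldType.

Definition rf (x : R) (k : nat) : R := \prod_(i < k) (x + i%:R).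

Lemma rfS (x : R) k : rf x k.+1 = rf x k * (x + k%:R).
Proof. by rewrite /rf big_ord_recr. Qed.

Lemma rfSl (x : R) k : rf x k.+1 = x * rf (x + 1) k.
Proof.
rewrite /rf big_ord_recl addr0; congr (_ * _); apply: eq_bigr => i _.
by rewrite /= /bump /= natrD addrA.
Qed.

Lemma rf_tele (x : R) k : rf (x + 1) k.+1 - rf x k.+1 = k.+1%:R * rf (x + 1) k.
Proof. rewrite rfS rfSl -natr1; ring. Qed.

Lemma rf0 k : (0 < k)%N -> rf 0 k = 0.
Proof. by case: k => // k _; rewrite rfSl mul0r. Qed.

Lemma rf_sum N k : (0 < k)%N ->
  k.+1%:R * \sum_(j < N.+1) rf j%:R k = rf N%:R k.+1.
Proof.
move=> k0; elim: N => [|N IH].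
  by rewrite big_ord1 /= rf0 // rfSl !mul0r mulr0.
have h := rf_tele N%:R k; rewrite natr1 in h.
rewrite big_ord_recr /= mulrDr IH -h; ring.
Qed.

Lemma rf_ge0 (x : R) k : 0 <= x -> 0 <= rf x k.
Proof. by move=> x0; apply: prodr_ge0 => i _; apply: addr_ge0. Qed.

Lemma rf_gt0 (x : R) k : 0 < x -> 0 < rf x k.
Proof. by move=> x0; apply: prodr_gt0 => i _; apply: ltr_wpDr. Qed.

Lemma main_sum N m : (0 < m)%N ->
  \sum_(j < N.+1) ((2 * N + 1)%:R - 2 * j%:R) * rf j%:R m =
  (N%:R + m%:R) * (2 * N%:R + m%:R) / ((m%:R + 1) * (m%:R + 2)) * rf N%:R m.
Proof.
move=> m0.
have E : \sum_(j < N.+1) ((2 * N + 1)%:R - 2 * j%:R) * rf j%:R m =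
  (2 * N + 2 * m + 1)%:R * \sum_(j < N.+1) rf j%:R m
   - 2 * \sum_(j < N.+1) rf j%:R m.+1.
  rewrite big_distrr /= big_distrr /= -sumrB; apply: eq_bigr => j _.
  rewrite rfS !natrD ?natrM; ring.
have h1 := (@rf_sum N m m0).
have h2 := (@rf_sum N m.+1 (ltn0Sn m)).
have e1 : \sum_(j < N.+1) rf j%:R m = rf N%:R m.+1 / m.+1%:R.
  by rewrite -h1 mulrC mulKf // pnatr_eq0.
have e2 : \sum_(j < N.+1) rf j%:R m.+1 = rf N%:R m.+2 / m.+2%:R.
  by rewrite -h2 mulrC mulKf // pnatr_eq0.
rewrite E e1 e2 !rfS -!natr1 !natrD ?natrM.
have mp : 0 <= m%:R :> R by apply: ler0n.
field.
by apply/andP; split; apply/eqP; lra.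
Qed.

End Alg.

End MA.
Import MA.

Module MB.
Local Open Scope ring_scope.

Section Alg2.
Variable R : realFieldType.

Lemma pow_le_rf (a b : R) m : 0 <= a -> a <= b -> 0 < b ->
  (a / b) ^+ m <= rf a m / rf b m.
Proof.
move=> a0 ab b0.
have -> : (a / b) ^+ m = \prod_(i < m) (a / b).
  by rewrite big_const_ord; elim: m {a0 ab} => [|m IH] //=; rewrite exprS IH.
rewrite /rf -prodf_div.
apply: ler_prod => i _; apply/andP; split.
  by rewrite divr_ge0 // ltW.
have bi : 0 < b + i%:R by apply: ltr_wpDr.
rewrite ler_pdivrMr // mulrAC ler_pdivlMr //.
have : 0 <= i%:R :> R by apply: ler0n.
nra.
Qed.

Lemma pow2_bound k : 1000 * ((20 + k)%:R + 1) * ((20 + k)%:R + 2) <= (2 : R) ^+ (20 + k).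
Proof.
elim: k => [|k IH].
  rewrite addn0; have -> : (2 : R) ^+ 20 = (2 ^+ 5) ^+ 4 by rewrite -exprM.
  have -> : (2 : R) ^+ 5 = 32 by rewrite !exprS expr0; lra.
  rewrite !exprS expr0.
  lra.
rewrite addnS exprS -[(20 + k).+1%:R]natr1.
have : 20 <= (20 + k)%:R :> R by rewrite ler_nat leq_addr.
move: IH; set x := (20 + k)%:R; set P := 2 ^+ _; nra.
Qed.

End Alg2.

End MB.
Import MB.

Module MC.
Local Open Scope ring_scope.

Section Alg3.
Variable R : realFieldType.

Lemma sum_bound (N n m : nat) : (0 < m)%N -> (0 < N)%N -> (n <= N)%N ->
  \sum_(k < n) ((2 * k + 1)%:R / (4 * N%:R ^+ 2)) * ((N%:R - k%:R) / N%:R) ^+ m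
  <= (N%:R + m%:R) * (2 * N%:R + m%:R) / (4 * N%:R ^+ 2 * ((m%:R + 1) * (m%:R + 2))) :> R.
Proof.
move=> m0 N0 nN.
have Np : 0 < N%:R :> R by rewrite ltr0n.
have rfN : 0 < rf N%:R m :> R by apply: rf_gt0.
have c0 : 0 < 4 * N%:R ^+ 2 :> R by apply: mulr_gt0 => //; apply: exprn_gt0.
pose F (k : nat) : R := ((2 * k + 1)%:R / (4 * N%:R ^+ 2)) * (rf (N%:R - k%:R) m / rf N%:R m).
have step1 : \sum_(k < n) ((2 * k + 1)%:R / (4 * N%:R ^+ 2)) * ((N%:R - k%:R) / N%:R) ^+ m
    <= \sum_(k < N.+1) F k.
  rewrite (big_ord_widen N.+1 (fun k : nat => ((2 * k + 1)%:R / (4 * N%:R ^+ 2)) * ((N%:R - k%:R) / N%:R) ^+ m : R)); last by apply: leqW.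
  rewrite big_mkcond /=; apply: ler_sum => i _.
  have iN : (i <= N)%N by rewrite -ltnS.
  have kN : (i%:R <= N%:R :> R) by rewrite ler_nat.
  have Fge0 : 0 <= F i.
    apply: mulr_ge0; first by rewrite divr_ge0 // ltW.
    by apply: divr_ge0; [apply: rf_ge0; rewrite subr_ge0 | exact: ltW].
  case: ifP => _ //.
  rewrite /F; apply: ler_wpM2l; first by rewrite divr_ge0 // ltW.
  by apply: pow_le_rf => //; [rewrite subr_ge0 | rewrite lerBlDr lerDl ler0n].
apply: (le_trans step1).
have E : \sum_(k < N.+1) F k =
   (\sum_(j < N.+1) ((2 * N + 1)%:R - 2 * j%:R) * rf j%:R m) / (4 * N%:R ^+ 2 * rf N%:R m).
  rewrite (reindex_inj rev_ord_inj) /= mulr_suml; apply: eq_bigr => i _.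
  have iN : (i <= N)%N by rewrite -ltnS.
  rewrite /F subSS.
  rewrite -(natrB _ (leq_subr i N)) subKn // natrD natrM (natrB _ iN).
  field.
  by apply/andP; split; apply: lt0r_neq0.
rewrite E main_sum //.
rewrite le_eqVlt; apply/orP; left; apply/eqP.
field.
have mp : 0 <= m%:R :> R by apply: ler0n.
by apply/and4P; split; apply/eqP; nra.
Qed.

End Alg3.

End MC.
Import MC.

Module MD.
Local Open Scope ring_scope.

Section Alg4.
Variable R : realFieldType.

Definition dd (m k : nat) : R := k%:R / (2 * (400 * m)%N%:R).
Definition ss (m k : nat) : R := if (k <= 200 * m)%N then dd m k ^+ 2 else 9 / 16.

Lemma final_bound m : (20 <= m)%N ->
  \sum_(k < (200 * m).+1) ((ss m k.+1 - ss m k) * (1 - 2 * dd m k) ^+ m)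
  <= (101%:R / 100%:R) / (2 * (m.+1)%:R * (m.+2)%:R).
Proof.
move=> m20.
have m0 : (0 < m)%N by apply: leq_trans m20.
have mp : 20 <= m%:R :> R by rewrite (ler_nat R 20 m).
set N := (400 * m)%N.
have Np : 0 < N%:R :> R by rewrite ltr0n muln_gt0.
have NE : N%:R = 400 * m%:R :> R by rewrite natrM.
rewrite big_ord_recr /=.
have last : (ss m (200 * m).+1 - ss m (200 * m)) * (1 - 2 * dd m (200 * m)) ^+ m
   = 1 / 2 * (1 / 2) ^+ m.
  rewrite /ss ltnn leqnn /dd -/N NE natrM.
  have -> : 1 - 2 * (200%:R * m%:R / (2 * (400 * m%:R))) = 1 / 2 :> R.
    by field; apply/eqP; lra.
  congr (_ * _); field; apply/eqP; lra.
rewrite last.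
have S : \sum_(i < 200 * m) (ss m i.+1 - ss m i) * (1 - 2 * dd m i) ^+ m =
  \sum_(k < 200 * m) ((2 * k + 1)%:R / (4 * N%:R ^+ 2)) * ((N%:R - k%:R) / N%:R) ^+ m.
  apply: eq_bigr => i _.
  have i1 : (i.+1 <= 200 * m)%N by apply: ltn_ord.
  have i2 : (i <= 200 * m)%N by apply: ltnW.
  rewrite /ss i1 i2 /dd -/N.
  congr (_ * _ ^+ _); rewrite ?natrD ?natrM -?[i.+1%:R]natr1; field; apply/eqP; lra.
rewrite S.
have nN : (200 * m <= N)%N by rewrite /N leq_mul2r; apply/orP; right.
have N0 : (0 < N)%N by rewrite /N muln_gt0.
apply: (le_trans (lerD (@sum_bound R N (200 * m) m m0 N0 nN) (lexx _))).
have Q := pow2_bound R (m - 20).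
rewrite subnKC // in Q.
set X := (m%:R + 1) * (m%:R + 2) : R.
have Xp : 0 < X by rewrite /X; apply: mulr_gt0; lra.
have -> : (N%:R + m%:R) * (2 * N%:R + m%:R) / (4 * N%:R ^+ 2 * X) = (401 * 801) / (4 * (400 * 400)) / X.
  by rewrite NE; field; apply/andP; split; apply/eqP; lra.
have -> : (101%:R / 100%:R) / (2 * (m.+1)%:R * (m.+2)%:R) = 101 / 200 / X :> R.
  rewrite -[m.+2%:R]natr1 -[m.+1%:R]natr1 /X; field; apply/andP; split; apply/eqP; lra.
have Qp : 0 < (2 : R) ^+ m by apply: exprn_gt0.
have -> : (1 / 2 : R) ^+ m = ((2 : R) ^+ m)^-1 by rewrite expr_div_n expr1n mul1r.
have X1 : 0 < 1000 * X.
  apply: mulr_gt0; [rewrite ltr0n; exact: isT | exact: Xp].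
have Q' : 1000 * X <= 2 ^+ m by rewrite /X mulrA; exact: Q.
have H1 : ((2 : R) ^+ m)^-1 <= (1000 * X)^-1.
  have p1 : (2 : R) ^+ m \is Num.pos by rewrite posrE.
  have p2 : 1000 * X \is Num.pos by rewrite posrE; exact: X1.
  by rewrite (lef_pV2 p1 p2).
have H2 : (1000 * X)^-1 = 1 / 1000 / X by field; apply/eqP; lra.
rewrite H2 in H1.
have H3 : (401 * 801) / (4 * (400 * 400)) / X + 1 / 1000 / X <= 101 / 200 / X.
  rewrite -mulrDl ler_pM2r ?invr_gt0 //; lra.
lra.
Qed.

End Alg4.

End MD.
Import MD.

Module ME.
Local Open Scope classical_set_scope.
Local Open Scope ring_scope.

Section Unif.
Variable R : realType.

Lemma unif_itv (a b : R) : 0 <= a -> a <= b -> b <= 1 ->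
  uniform_prob (@ltr01 R) `[a, b] = (b - a)%:E.
Proof.
move=> a0 ab b1.
rewrite /uniform_prob.
rewrite (eq_integral (cst 1%:E)); last first.
  move=> x; rewrite inE /= in_itv /= => /andP[ax xb].
  rewrite /uniform_pdf ifT; first by rewrite subr0 invr1.
  apply/andP; split; lra.
rewrite integral_cst //= lebesgue_measure_itv /= lte_fin.
case: (ltrP a b) => h; first by rewrite mul1e -EFinD.
have -> : b = a by apply/eqP; rewrite eq_le h ab.
by rewrite mule0 subrr.
Qed.

Lemma unif_B (d : R) : 0 <= d -> d <= 4^-1 ->
  uniform_prob (@ltr01 R) [set r | d ^+ 2 < (4^-1 - r) ^+ 2] = (1 - 2 * d)%:E.
Proof.
move=> d0 d4.
have -> : [set r | d ^+ 2 < (4^-1 - r) ^+ 2] = ~` `[4^-1 - d, 4^-1 + d].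
  apply/seteqP; split => r /=.
    rewrite in_itv /= => h /andP[h1 h2]; nra.
  move=> h; rewrite ltNge; apply/negP => h'; apply: h; rewrite in_itv /=.
  apply/andP; split; nra.
rewrite probability_setC //.
rewrite -[X in (1 - X)%E]/(uniform_prob (@ltr01 R) `[4^-1 - d, 4^-1 + d]).
rewrite unif_itv; [|lra|lra|lra].
by rewrite -EFinB; congr (_%:E); ring.
Qed.

Lemma unif_out : uniform_prob (@ltr01 R) (~` `[0, 1]) = 0%E.
Proof.
rewrite probability_setC // -[X in (1 - X)%E]/(uniform_prob (@ltr01 R) `[0, 1]).
rewrite unif_itv ?lexx ?ler01 //.
by rewrite subr0 subee.
Qed.

End Unif.

End ME.
Import ME.

Module MF.
Local Open Scope ring_scope.

Section Step.
Variable R : realFieldType.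

Lemma step_all (t : nat -> R) (y : R) : (forall k, t k <= t k.+1) ->
  forall n, t n < y -> \sum_(k < n) (t k.+1 - t k) * (if t k < y then 1 else 0) = t n - t 0.
Proof.
move=> mono; elim => [|n IH] tny; first by rewrite big_ord0 subrr.
have tn : t n < y by apply: le_lt_trans (mono n) tny.
rewrite big_ord_recr /= IH // tn mulr1; ring.
Qed.

Lemma step_le (t : nat -> R) (y : R) : (forall k, t k <= t k.+1) -> t 0 = 0 ->
  forall n, y <= t n -> y <= \sum_(k < n) (t k.+1 - t k) * (if t k < y then 1 else 0).
Proof.
move=> mono t0; elim => [|n IH] yn.
  by rewrite big_ord0; rewrite t0 in yn.
rewrite big_ord_recr /=.
case: (leP y (t n)) => h.
  apply: (le_trans (IH h)); rewrite lerDl; apply: mulr_ge0; last by [].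
  by rewrite subr_ge0.
rewrite (@step_all t y mono n h).
rewrite mulr1 t0 subr0; lra.
Qed.

End Step.

End MF.
Import MF.

Module MG.
Local Open Scope classical_set_scope.
Local Open Scope ring_scope.

Lemma dd_range (R : realFieldType) m k : (0 < m)%N -> (k <= 200 * m)%N ->
  0 <= dd R m k /\ dd R m k <= 4^-1.
Proof.
move=> m0 km; rewrite /dd.
have mp : 0 < m%:R :> R by rewrite ltr0n.
have kp : 0 <= k%:R :> R by apply: ler0n.
have kl : k%:R <= 200 * m%:R :> R by rewrite -natrM ler_nat.
rewrite natrM.
have q : 0 < 2 * (400%:R * m%:R) :> R by nra.
split; first exact: divr_ge0 kp (ltW q).
rewrite (ler_pdivrMr _ _ q); lra.
Qed.

Lemma ss0 (R : realFieldType) m : ss R m 0 = 0.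
Proof. by rewrite /ss leq0n /dd mul0r expr0n. Qed.

Lemma ss_mono (R : realFieldType) m : (0 < m)%N -> forall k, ss R m k <= ss R m k.+1.
Proof.
move=> m0 k; rewrite /ss.
case: ifP => h1; case: ifP => h2.
- have [a0 a1] := @dd_range R m _ m0 h1.
  have [b0 b1] := @dd_range R m _ m0 h2.
  have : dd R m k <= dd R m k.+1.
    have q0 : 0 < 2 * (400 * m)%N%:R :> R.
      rewrite natrM; have : 0 < m%:R :> R by rewrite ltr0n.
      nra.
    have q1 : 0 < (2 * (400 * m)%N%:R :> R)^-1 by rewrite invr_gt0.
    rewrite /dd (ler_pM2r q1) ler_nat; exact: leqnSn.
  nra.
- have [a0 a1] := @dd_range R m _ m0 h1.
  nra.
- by move: h1; rewrite (leq_trans (leqnSn k) h2).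
- by [].
Qed.

Lemma meas_bigmin d (T : measurableType d) (R : realType) (I : Type)
   (G : I -> T -> \bar R) (s : seq I) :
  (forall j, measurable_fun setT (G j)) ->
  measurable_fun setT (fun x => \big[Order.min/+oo%E]_(j <- s) G j x).
Proof.
move=> mG; elim: s => [|h t IH].
  by under eq_fun do rewrite big_nil; exact: measurable_cst.
under eq_fun do rewrite big_cons.
exact: measurable_mine.
Qed.

End MG.
Import MG.

Local Open Scope classical_set_scope.
Local Open Scope ring_scope.

Theorem lemma1 (d : measure_display) (T : measurableType d) (R : realType)
  (P : probability T R) (m : nat) (theta : 'I_m -> {RV P >-> R}) :
  mutually_independent P (fun j => (theta j : T -> R)) ->
  (forall j, uniform01 P (theta j)) ->
  (20 <= m)%N ->
  (\int[P]_x (\big[Order.min/+oo%E]_(j < m) ((4^-1 - theta j x) ^+ 2)%:E)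
     <= ((101%:R / 100%:R : R) / (2 * (m.+1)%:R * (m.+2)%:R))%:E)%E.
Proof.
move=> indep unif m20.
have m0 : (0 < m)%N by apply: leq_trans m20.
pose j0 : 'I_m := Ordinal m0.
pose n := (200 * m)%N.
pose s := ss R m.
pose g := fun r : R => (4^-1 - r) ^+ 2.
have mg : measurable_fun setT g.
  by apply: measurable_funX; apply: measurable_funB.
pose B k := [set r : R | s k < g r].
have mB k : measurable (B k).
  have : measurable (setT `&` g @^-1` `]s k, +oo[) by apply: mg => //; exact: measurable_itv.
  rewrite setTI; congr measurable; apply/seteqP; split => r /=; rewrite in_itv /= andbT //.
pose A k := \bigcap_(j in [set: 'I_m]) ((theta j : T -> R) @^-1` B k).
have mA k : measurable (A k).
  apply: fin_bigcap_measurable; first exact: finite_finset.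
  by move=> j _; apply: measurable_funPTI.
have PA k : (k <= n)%N -> P (A k) = ((1 - 2 * dd R m k) ^+ m)%:E.
  move=> kn.
  rewrite /A (indep (fun _ => B k)) //.
  have [d0 d4] := @dd_range R m k m0 kn.
  have Bk : B k = [set r | dd R m k ^+ 2 < (4^-1 - r) ^+ 2].
    by rewrite /B /s /ss kn.
  under eq_bigr do rewrite (unif _ _ (mB k)) Bk unif_B //.
  by rewrite prodEFin prodr_const card_ord.
have smono := @ss_mono R m m0.
pose c k := s k.+1 - s k.
have c0 k : 0 <= c k by rewrite /c subr_ge0; apply: smono.
pose S x := \sum_(k < n.+1) ((c k * \1_(A k) x)%:E).
pose F j x := ((4^-1 - theta j x) ^+ 2)%:E.
have mF j : measurable_fun setT (F j).
  apply/measurable_EFinP; apply: measurable_funX; exact: measurable_funB.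
pose Y x := \big[Order.min/+oo%E]_(j < m) F j x.
have mY : measurable_fun setT Y by exact: (@meas_bigmin _ _ _ _ F (index_enum (ordinal m)) mF).
have Y0 x : (0 <= Y x)%E.
  by apply: le_bigmin => // j _; rewrite /F lee_fin sqr_ge0.
have mSk (k : 'I_n.+1) : measurable_fun setT (fun x => (c k * \1_(A k) x)%:E).
  apply/measurable_EFinP; apply: measurable_funM => //.
have Sk0 (k : 'I_n.+1) x : (0 <= (c k * \1_(A k) x)%:E)%E.
  by rewrite lee_fin mulr_ge0.
have mS : measurable_fun setT S by apply: emeasurable_sum.
have S0 x : (0 <= S x)%E by apply: sume_ge0 => k _.
have IS : (\int[P]_x S x = \sum_(k < n.+1) (c k)%:E * P (A k))%E.
  rewrite /S ge0_integral_sum //; apply: eq_bigr => k _.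
  under eq_integral do rewrite EFinM.
  rewrite ge0_integralZl_EFin //=.
  - by rewrite integral_indic // setIT.
  - by apply/measurable_EFinP; exact: measurable_indic.
have YS : (\int[P]_x Y x <= \int[P]_x S x)%E.
  apply: ae_ge0_le_integral => //.
  have mC : measurable (~` `[0, 1] : set R) by apply: measurableC; exact: measurable_itv.
  exists ((theta j0 : T -> R) @^-1` (~` `[0, 1])); split.
  - exact: measurable_funPTI.
  - by apply: (etrans (unif j0 _ mC)); exact: unif_out.
  move=> x /= H th; apply: H => _.
  have th' : 0 <= theta j0 x <= 1 by move: th; rewrite in_itv.
  have Yle : (Y x <= (9 / 16 : R)%:E)%E.
    apply: le_trans (bigmin_le _ j0 _) _.
    rewrite /F lee_fin; move/andP: th' => [t0 t1]; nra.
  have Yfin : Y x = (fine (Y x))%:E.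
    by rewrite fineK // ge0_fin_numE // (le_lt_trans Yle (ltry _)).
  set y := fine (Y x) in Yfin.
  have memA k : (x \in A k) = (s k < y).
    apply/idP/idP.
      move/set_mem => HA; rewrite -lte_fin -Yfin.
      apply/bigmin_gtP; split; first exact: ltry.
      by move=> j _; rewrite /F lte_fin; exact: (HA j I).
    move=> hk; apply/mem_set => j _ /=.
    move: hk; rewrite -lte_fin -Yfin => /bigmin_gtP [_ /(_ j isT)].
    by rewrite /F lte_fin.
  have Sx : S x = (\sum_(k < n.+1) (s k.+1 - s k) * (if s k < y then 1 else 0))%:E.
    rewrite /S sumEFin; congr (_%:E); apply: eq_bigr => k _.
    by rewrite indicE memA /c; case: (s k < y).
  rewrite Yfin Sx lee_fin; apply: step_le => //.
    exact: ss0.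
  have : (n.+1 <= n)%N = false by rewrite ltnn.
  rewrite /s /ss -/n => ->.
  by move: Yle; rewrite Yfin lee_fin.
apply: (le_trans YS); rewrite IS.
rewrite (eq_bigr (fun k : 'I_n.+1 => ((c k * (1 - 2 * dd R m k) ^+ m)%:E))); last first.
  by move=> k _; rewrite PA ?EFinM // -ltnS.
rewrite sumEFin lee_fin; exact: final_bound.
Qed.
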